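(* Let $G$ be a maximal $1$-plane graph with at least $4$ vertices in which every edge lies in some $K_4$-subgraph, and let $\{G_i\}_{i\in\{0,\dots,N\}}$ be a $K_4$-extension sequence of $G$ determined by the SWM*-rule, with $G_i=G[V(G_{i-1})\cup V(F_i)]$. Let $i\in\{0,\dots,N-1\}$, assume that $F_{i+1}$ is a strong $K_4$-link from $G_i$, and let $x$ be the vertex of $V(F_{i+1})\setminus V(G_i)$. Then neither of the following can happen: (1) $G_i$ has two distinct non-removable edges $f_1=a_1b_1$ and $f_2=a_2b_2$ which are crossed (in $G$) by edges $xc_1$ and $xc_2$ respectively, where $c_1,c_2\in V(G_i)$; (2) $G_i$ has a $3$-cycle $abca$ such that $ab$ is non-removable in $G_i$, both $\{a,c\}$ and $\{b,c\}$ are cut-sets of $G_i$, and the edge $xc$ crosses $ab$.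
   Context: A $1$-plane graph is a simple graph drawn in the plane (vertices distinct points, edges arcs joining their ends, no edge crossing itself, two edges crossing at most once, adjacent edges not crossing) so that every edge is crossed at most once; it is maximal if no edge joining two non-adjacent vertices can be added so that the result is still a simple $1$-plane graph. An edge is clean if it crosses no other edge. If edge $ux$ crosses another edge at point $\alpha$, the arc $u\alpha$ is the near half-edge of $ux$ incident with $u$. Two edge segments are consecutive on the boundary of a face if they are consecutive on one of the closed walks forming that boundary. $G[A]$ is the subgraph induced by $A$. A cut-set is a set of vertices whose deletion disconnects the graph. For a vertex-induced subgraph $G'$ and a $K_4$-subgraph $F$ of $G$ with $1\le|V(F)\cap V(G')|\le 3$, $F$ is a strong/weak/micro $K_4$-link from $G'$ when $|V(F)\cap V(G')|=3/2/1$, and $G[V(G')\cup V(F)]$ is the corresponding $K_4$-extension of $G'$. SWM*-rule for a proper vertex-induced subgraph $G'$: choose any strong $K_4$-link from $G'$ if one exists; otherwise any weak one if one exists; otherwise choose $u\in V(G')$ with $N_G(u)\not\subseteq V(G')$, then $x\in N_G(u)\setminus V(G')$ such that for some $w\in N_G(u)\cap V(G')$ the edge $ux$ (or its near half-edge at $u$) and $uw$ (or its near half-edge at $u$) are consecutive on the boundary of some face of $G$; if $ux$ is clean choose any $K_4$-subgraph containing $ux$, and if $ux$ crosses edge $st$ choose $G[\{u,x,s,t\}]$. A $K_4$-extension sequence determined by the SWM*-rule is $G_0\cong K_4$, $G_N=G$, $G_i=G[V(G_{i-1})\cup V(F_i)]$ with $F_i$ a $K_4$-link from $G_{i-1}$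 chosen by the SWM*-rule. An edge $f$ of a $2$-connected graph $H$ is removable in $H$ if $H-f$ is $2$-connected, and non-removable otherwise (each $G_i$ is $2$-connected). *)

(* Defs.v *)
(* Combinatorial model of a 1-plane drawing via its
   planarization, encoded as a genus-0 combinatorial map (rotation system). *)
From mathcomp Require Import all_boot all_fingroup.
Set Implicit Arguments. Unset Strict Implicit. Unset Printing Implicit Defensive.

(* Planarization of a drawing of a graph on vertex type V:
   darts (half-segments), alph = segment involution, sigm = rotation at
   nodes, lab d = Some v if dart d leaves the vertex point v, None if it
   leaves a crossing point. Faces are the orbits of phi d = sigm (alph d). *)
Record map1p (V : finType) := Map1p {
  dart : finType;
  alph : {perm dart};
  sigm : {perm dart};
  lab : dart -> option V }.

Section Drawing.
Variables (V : finType) (adj : rel V) (M : map1p V).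
Local Notation D := (dart M).
Local Notation a := (@alph _ M).
Local Notation s := (@sigm _ M).
Local Notation lb := (@lab _ M).

Definition phi : {perm D} := (@alph _ M * @sigm _ M)%g.

(* other end vertex of the G-edge whose near half-edge at its origin is d *)
Definition far (d : D) : option V :=
  match lb (a d) with
  | Some v => Some v
  | None => lb (a (s (s (a d))))
  end.

Definition drawing : Prop :=
  [/\ (forall u v, adj u v = adj v u) /\ (forall u, ~~ adj u u),
    (forall d, a (a d) = d /\ a d != d),
    (* the planarization is connected and of genus 0 (Euler's formula) *)
    (forall d e, connect [rel x y | (y == a x) || (y == s x)] d e) /\
    2 * (#|porbits s| + #|porbits phi|) = #|D| + 4 ,
    (* vertex points: each vertex of V is exactly one node *)
    (forall d, lb (s d) = lb d) /\
    (forall v, (exists d, lb d = Some v) /\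
        forall d e, lb d = Some v -> lb e = Some v -> fconnect s d e) &
    [/\
    (* crossing points: degree 4, neighbours are vertex points, the two
       crossing edges (alternating in rotation) have 4 distinct ends *)
    (forall c, lb c = None ->
       [/\ s (s (s (s c))) = c, s (s c) != c, lb (a c) != None &
           uniq [:: lb (a c); lb (a (s c)); lb (a (s (s c)));
                    lb (a (s (s (s c))))]]),
    (* no loops, every near half-edge leads to a vertex *)
    (forall d u, lb d = Some u -> far d != None /\ far d != Some u),
    (* no multiple edges *)
    (forall d e, lb d = lb e -> lb d != None -> far d = far e -> d = e) &
    (forall u v, adj u v <-> exists d, lb d = Some u /\ far d = Some v)]].

Definition crosses_at (d : D) (x y : V) : Prop :=
  lb (a d) = None /\
  ((lb (a (s (a d))) = Some x /\ lb (a (s (s (s (a d))))) = Some y) \/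
   (lb (a (s (a d))) = Some y /\ lb (a (s (s (s (a d))))) = Some x)).

Definition crosses (p q x y : V) : Prop :=
  exists d, [/\ lb d = Some p, far d = Some q & crosses_at d x y].

(* the segments of darts d and e are consecutive on the boundary of a face *)
Definition seg_consec (d e : D) : Prop :=
  exists f, (((f == d) || (f == a d)) && ((phi f == e) || (phi f == a e)))
         || (((f == e) || (f == a e)) && ((phi f == d) || (phi f == a d))).

(* maximality: no edge joining non-adjacent vertices can be added, neither
   clean (inside a face) nor crossing a single currently clean edge st with
   u, v not in {s,t} (through the two faces on either side of st) *)
Definition maximal : Prop :=
  forall u v, u != v -> ~~ adj u v ->
   ~ (exists d e, [/\ lb d = Some u, lb e = Some v & fconnect phi d e]) /\
   ~ (exists g x y d e, [/\ lb g = Some x, lb (a g) = Some y,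
        u \notin [:: x; y], v \notin [:: x; y] &
        [/\ lb d = Some u, lb e = Some v,
            fconnect phi g d & fconnect phi (a g) e]]).

Definition clique4 (A : {set V}) : Prop :=
  #|A| = 4 /\ {in A &, forall x y, x != y -> adj x y}.

Definition every_edge_in_K4 : Prop :=
  forall u v, adj u v -> exists A, [/\ clique4 A, u \in A & v \in A].

Definition ind_connected (S : {set V}) (r : rel V) : Prop :=
  forall u v, u \in S -> v \in S ->
    connect [rel x y | [&& x \in S, y \in S & r x y]] u v.

Definition two_connected (S : {set V}) (r : rel V) : Prop :=
  [/\ 2 < #|S|, ind_connected S r &
      forall v, v \in S -> ind_connected (S :\ v) r].

Definition nonremovable (S : {set V}) (x y : V) : Prop :=
  ~ two_connected S [rel p q | adj p q && ([set p; q] != [set x; y])].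

Definition cutset (S T : {set V}) : Prop :=
  T \subset S /\ ~ ind_connected (S :\: T) adj.

Definition has_link (S : {set V}) (k : nat) : Prop :=
  exists F, clique4 F /\ #|F :&: S| = k.

Definition swm (S F : {set V}) : Prop :=
  [/\ clique4 F, 0 < #|F :&: S| < 4,
      has_link S 3 -> #|F :&: S| = 3,
      ~ has_link S 3 -> has_link S 2 -> #|F :&: S| = 2 &
      ~ has_link S 3 -> ~ has_link S 2 ->
      exists u x w d e,
        [/\ u \in S, x \notin S, w \in S,
            [/\ lb d = Some u, far d = Some x, lb e = Some u,
                far e = Some w & seg_consec d e] &
            (lb (a d) != None /\ u \in F /\ x \in F) \/
            (exists y z, crosses_at d y z /\ F = [set u; x; y; z])]].

(* K4-extension sequence G_0,...,G_N (vertex sets VS i) determined by the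
   SWM*-rule, with links F i (1 <= i <= N) *)
Definition K4_ext_seq (N : nat) (VS F : nat -> {set V}) : Prop :=
  [/\ clique4 (VS 0), VS N = [set: V] &
      forall i, 0 < i <= N -> swm (VS i.-1) (F i) /\ VS i = VS i.-1 :|: F i].

End Drawing.

(* Main.v *)
Require Import Defs.
From mathcomp Require Import all_boot all_fingroup.
Set Implicit Arguments. Unset Strict Implicit. Unset Printing Implicit Defensive.

Lemma card_l (T : finType) (l : seq T) (S : {set T}) :
  uniq l -> #|[set x in l] :&: S| = count (mem S) l.
Proof.
move=> ul.
have -> : [set x in l] :&: S = [set x in [seq y <- l | y \in S]].
  by apply/setP=> y; rewrite !inE mem_filter andbC.
by rewrite cardsE (card_uniqP _) ?filter_uniq // size_filter.
Qed.

Lemma set4E (T : finType) (p0 p1 p2 p3 : T) :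
  [set p0; p1; p2; p3] = [set x in [:: p0; p1; p2; p3]].
Proof. by apply/setP=> y; rewrite !inE -!orbA ?orbF. Qed.

Lemma card4 (T : finType) (p0 p1 p2 p3 : T) (S : {set T}) :
  uniq [:: p0; p1; p2; p3] ->
  #|[set p0; p1; p2; p3] :&: S| = count (mem S) [:: p0; p1; p2; p3].
Proof. by move=> u; rewrite set4E card_l. Qed.

Lemma clique4_of (T : finType) (adj : rel T) (p0 p1 p2 p3 : T) :
  (forall u v, adj u v = adj v u) ->
  uniq [:: p0;p1;p2;p3] -> adj p0 p1 -> adj p0 p2 -> adj p0 p3 ->
  adj p1 p2 -> adj p1 p3 -> adj p2 p3 -> clique4 adj [set p0;p1;p2;p3].
Proof.
move=> sym u h01 h02 h03 h12 h13 h23; split.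
  by rewrite -(setIT [set p0;p1;p2;p3]) card4 //= !inE.
move=> y z; rewrite !inE -!orbA.
by case/or4P=> /eqP-> /or4P [] /eqP-> //; rewrite ?eqxx // => _; rewrite sym.
Qed.

Section Draw.
Variables (V : finType) (adj : rel V) (M : map1p V).
Hypothesis Hd : drawing adj M.
Hypothesis Hmax : maximal adj M.
Local Notation D := (dart M).
Local Notation a := (@alph _ M).
Local Notation s := (@sigm _ M).
Local Notation lb := (@lab _ M).

Lemma adj_sym u v : adj u v = adj v u.
Proof. by case: Hd => -[]. Qed.
Lemma adj_irr u : ~~ adj u u.
Proof. by case: Hd => -[]. Qed.
Lemma aK d : a (a d) = d.
Proof. by case: Hd => _ H _ _ _; case: (H d). Qed.
Lemma lb_s d : lb (s d) = lb d.
Proof. by case: Hd => _ _ _ [H _] _. Qed.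
Lemma cross_prop c : lb c = None ->
  [/\ s (s (s (s c))) = c, s (s c) != c, lb (a c) != None &
      uniq [:: lb (a c); lb (a (s c)); lb (a (s (s c)));
               lb (a (s (s (s c))))]].
Proof. by case: Hd => _ _ _ _ [H _ _ _]; apply: H. Qed.
Lemma far_ok d u : lb d = Some u -> far d != None /\ far d != Some u.
Proof. by case: Hd => _ _ _ _ [_ H _ _]; apply: H. Qed.
Lemma adjP u v : adj u v <-> exists d, lb d = Some u /\ far d = Some v.
Proof. by case: Hd => _ _ _ _ [_ _ _ H]; apply: H. Qed.

Lemma phiE d : phi M d = s (a d).
Proof. by rewrite /phi permM. Qed.

Lemma face_adj u v d e : u != v -> lb d = Some u -> lb e = Some v ->
  fconnect (phi M) d e -> adj u v.
Proof.
move=> nuv ld le con; apply/negPn/negP => nadj.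
by case: (Hmax nuv nadj) => H _; apply: H; exists d, e.
Qed.

Lemma farE d : far d = if lb (a d) is Some v then Some v
                       else lb (a (s (s (a d)))).
Proof. by []. Qed.

Lemma cons_adj c p q : lb c = None -> lb (a (s (s (s c)))) = Some p ->
  lb (a c) = Some q -> p != q -> adj p q.
Proof.
move=> lc lp lq npq; have [s4 _ _ _] := cross_prop lc.
apply: (face_adj npq lp (_ : lb (iter 2 (phi M) (a (s (s (s c))))) = Some q)).
  by rewrite /= !phiE aK s4 lb_s.
exact: fconnect_iter.
Qed.

Lemma cross_K4 c : lb c = None -> exists p0 p1 p2 p3,
  [/\ lb (a c) = Some p0, lb (a (s c)) = Some p1, lb (a (s (s c))) = Some p2,
      lb (a (s (s (s c)))) = Some p3 &
      uniq [:: p0; p1; p2; p3] /\ clique4 adj [set p0; p1; p2; p3]].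
Proof.
move=> lc.
have lc1 : lb (s c) = None by rewrite lb_s.
have lc2 : lb (s (s c)) = None by rewrite !lb_s.
have lc3 : lb (s (s (s c))) = None by rewrite !lb_s.
have [s4 _ n0 u] := cross_prop lc.
have [_ _ n1 _] := cross_prop lc1.
have [_ _ n2 _] := cross_prop lc2.
have [_ _ n3 _] := cross_prop lc3.
move: n0 n1 n2 n3 u.
case E0: (lb (a c)) => [p0|] // _.
case E1: (lb (a (s c))) => [p1|] // _.
case E2: (lb (a (s (s c)))) => [p2|] // _.
case E3: (lb (a (s (s (s c))))) => [p3|] // _ u.
have uu : uniq [:: p0; p1; p2; p3].
  by rewrite -(map_inj_uniq (@Some_inj _)).
exists p0, p1, p2, p3; split => //; split => //.
have s5 : s (s (s (s (s c)))) = s c by rewrite s4.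
have s6 : s (s (s (s (s (s c))))) = s (s c) by rewrite s4.
move: (uu); rewrite /= !inE !negb_or => /and4P [/and3P [n01 n02 n03] /andP [n12 n13] n23 _].
apply: clique4_of => //.
- by apply: adj_sym.
- by apply: (cons_adj lc1); rewrite ?s4.
- apply/adjP; exists (a c); split => //.
  by rewrite farE aK lc.
- by rewrite adj_sym; apply: (cons_adj lc) => //; rewrite eq_sym.
- by apply: (cons_adj lc2); rewrite ?s5.
- apply/adjP; exists (a (s c)); split => //.
  by rewrite farE aK lc1.
- by apply: (cons_adj lc3); rewrite ?s6.
Qed.

Lemma angle g h : s g = h ->
  exists L R, fconnect (phi M) L R /\
  ((lb (a g) != None /\ lb L = lb (a g)) \/
   (lb (a g) = None /\ (lb L = lb (a (s (a g))) \/ lb L = lb (a (s (s (s (a g)))))))) /\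
  ((lb (a h) != None /\ lb R = lb (a h)) \/
   (lb (a h) = None /\ (lb R = lb (a (s (a h))) \/ lb R = lb (a (s (s (s (a h)))))))).
Proof.
move=> sgh.
have hL : exists L, fconnect (phi M) L h /\
  ((lb (a g) != None /\ lb L = lb (a g)) \/
   (lb (a g) = None /\ (lb L = lb (a (s (a g))) \/ lb L = lb (a (s (s (s (a g)))))))).
  case E: (lb (a g)) => [v|].
    exists (a g); split; last by left.
    by rewrite -sgh (_ : s g = iter 1 (phi M) (a g)) ?fconnect_iter //= phiE aK.
  have [s4 _ _ _] := cross_prop E.
  exists (a (s (s (s (a g))))); split; last by right; split => //; right.
  by rewrite -sgh (_ : s g = iter 2 (phi M) (a (s (s (s (a g)))))) ?fconnect_iter //= !phiE aK s4 aK.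
have [L [cL HL]] := hL.
case E: (lb (a h)) => [v|].
  exists L, (phi M h); split; last split => //.
    apply: connect_trans cL _; exact: (fconnect_iter _ 1).
  by left; rewrite phiE lb_s E.
exists L, (iter 2 (phi M) h); split; last split => //.
  apply: connect_trans cL _; exact: fconnect_iter.
by right; split => //; left; rewrite /= !phiE lb_s.
Qed.

Lemma seg_half d e u x w : lb d = Some u -> far d = Some x -> lb e = Some u ->
  far e = Some w -> x != w ->
  forall f, ((f == d) || (f == a d)) && ((phi M f == e) || (phi M f == a e)) ->
  s d = e.
Proof.
move=> ld fd le fe nxw f /andP [/orP [] /eqP -> /orP [] /eqP].
- rewrite phiE => E. have := far_ok ld; rewrite farE.
  by have := lb_s (a d); rewrite E le => <- [_ /eqP].
- rewrite phiE => E.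
  case Ed: (lb (a d)) => [v|].
    have Ee : lb (a e) = Some v by rewrite -E lb_s.
    move: fd fe; rewrite !farE Ed Ee => -[Hx] [Hw].
    by rewrite -Hx -Hw eqxx in nxw.
  have [_ _ _ ] := cross_prop Ed.
  by rewrite E aK aK ld le /= inE eqxx.
- by rewrite phiE aK.
- rewrite phiE aK => E.
  by have := far_ok le; rewrite farE -E lb_s ld => -[_ /eqP].
Qed.

Lemma seg_cases d e u x w : lb d = Some u -> far d = Some x -> lb e = Some u ->
  far e = Some w -> x != w -> seg_consec d e -> s d = e \/ s e = d.
Proof.
move=> ld fd le fe nxw [f /orP [] H].
  by left; apply: (seg_half ld fd le fe nxw H).
by right; apply: (seg_half le fe ld fd _ H); rewrite eq_sym.
Qed.


Lemma dside (F : {set V}) d u x L :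
  lb d = Some u -> far d = Some x -> x != u ->
  ((lb (a d) != None /\ x \in F) \/
   (exists y z, crosses_at d y z /\ F = [set u; x; y; z])) ->
  ((lb (a d) != None /\ lb L = lb (a d)) \/
   (lb (a d) = None /\ (lb L = lb (a (s (a d))) \/ lb L = lb (a (s (s (s (a d)))))))) ->
  exists y, [/\ lb L = Some y, y \in F & y != u].
Proof.
move=> ld fd nxu HF [[n EL] | [Nd EL]].
  case: HF => [[_ xF] | [y [z [[Nd _] _]]]]; last by rewrite Nd in n.
  exists x; split => //; rewrite EL; move: fd; rewrite farE.
  by case: (lb (a d)) n.
case: HF => [[n _]|[y [z [[_ Hyz] ->]]]]; first by rewrite Nd in n.
have [_ _ _ U] := cross_prop Nd; rewrite aK ld in U.
case: Hyz => [[Ey Ez]|[Ey Ez]]; case: EL => EL; rewrite EL ?Ey ?Ez in U *.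
- exists y; split => //; first by rewrite !inE eqxx !orbT.
  by apply: contraTneq U => ->; rewrite /= !inE eqxx.
- exists z; split => //; first by rewrite !inE eqxx !orbT.
  by apply: contraTneq U => ->; rewrite /= !inE eqxx !orbT.
- exists z; split => //; first by rewrite !inE eqxx !orbT.
  by apply: contraTneq U => ->; rewrite /= !inE eqxx.
- exists y; split => //; first by rewrite !inE eqxx !orbT.
  by apply: contraTneq U => ->; rewrite /= !inE eqxx !orbT.
Qed.

Lemma eside (S : {set V}) e u w R :
  ~ has_link adj S 3 -> ~ has_link adj S 2 ->
  lb e = Some u -> far e = Some w -> u \in S -> w \in S ->
  ((lb (a e) != None /\ lb R = lb (a e)) \/
   (lb (a e) = None /\ (lb R = lb (a (s (a e))) \/ lb R = lb (a (s (s (s (a e)))))))) ->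
  exists w', [/\ lb R = Some w', w' \in S & w' != u].
Proof.
move=> N3 N2 le fe uS wS [[n ER] | [Ne ER]].
  exists w; split => //.
    by rewrite ER; move: fe; rewrite farE; case: (lb (a e)) n.
  by have [_] := far_ok le; rewrite fe; apply: contra => /eqP ->.
have [p0 [p1 [p2 [p3 [E0 E1 E2 E3 [U C]]]]]] := cross_K4 Ne.
move: E0; rewrite aK le => -[?]; subst p0.
move: fe; rewrite farE Ne E2 => -[?]; subst p2.
have hc := card4 S U; rewrite /= uS wS in hc.
have h1 : p1 \in S.
  apply/negPn/negP => h1; case/boolP: (p3 \in S) => h3.
    by apply: N3; exists [set u; p1; w; p3]; split => //; rewrite hc (negbTE h1) h3.
  by apply: N2; exists [set u; p1; w; p3]; split => //; rewrite hc (negbTE h1) (negbTE h3).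
have h3 : p3 \in S.
  apply/negPn/negP => h3.
  by apply: N3; exists [set u; p1; w; p3]; split => //; rewrite hc (negbTE h3) h1.
move: U; rewrite /= !inE !negb_or => /and4P [/and3P [n01 n02 n03] _ _ _].
by case: ER => ->; [exists p1 | exists p3]; split => //; rewrite eq_sym.
Qed.


Lemma micro_link S F : swm adj M S F -> ~ has_link adj S 3 -> ~ has_link adj S 2 ->
  exists u y w, [/\ u \in F, u \in S, y \in F & w \in S] /\
                [/\ y != u, w != u & (y == w) || adj y w].
Proof.
case=> cF _ _ _ Hm N3 N2.
have [u [x [w [d [e [uS xS wS [ld fd le fe sc] HF]]]]]] := Hm N3 N2.
have nxu : x != u by apply: contraNneq xS => ->.
have nxw : x != w by apply: contraNneq xS => ->.
have uF : u \in F.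
  by case: HF => [[_ [uF _]] | [y [z [_ ->]]]] //; rewrite !inE ?eqxx.
have HF' : (lb (a d) != None /\ x \in F) \/
           (exists y z, crosses_at d y z /\ F = [set u; x; y; z]).
  by case: HF => [[n [_ xF]] | H]; [left | right].
case: (seg_cases ld fd le fe nxw sc) => E.
  have [L [R [cLR [HL HR]]]] := angle E.
  have [y [lL yF yu]] := dside ld fd nxu HF' HL.
  have [w' [lR w'S w'u]] := eside N3 N2 le fe uS wS HR.
  exists u, y, w'; split => //; split => //.
  case: (eqVneq y w') => [->|nyw]; first by rewrite ?eqxx.
  by rewrite (face_adj nyw lL lR cLR) orbT.
have [L [R [cLR [HL HR]]]] := angle E.
have [y [lR yF yu]] := dside ld fd nxu HF' HR.
have [w' [lL w'S w'u]] := eside N3 N2 le fe uS wS HL.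
exists u, y, w'; split => //; split => //.
case: (eqVneq w' y) => [->|nyw]; first by rewrite ?eqxx.
by rewrite adj_sym (face_adj nyw lL lR cLR) orbT.
Qed.


Definition rin (T : {set V}) (r : rel V) := [rel p q | [&& p \in T, q \in T & r p q]].

Lemma conn_gen (T T' : {set V}) (r r' : rel V) p q :
  (forall y z, y \in T -> z \in T -> r y z -> connect (rin T' r') y z) ->
  connect (rin T r) p q -> connect (rin T' r') p q.
Proof.
move=> H; apply: connect_sub => y z /and3P [yT zT ryz]; exact: H.
Qed.

Lemma union_conn (A B T : {set V}) :
  A \subset T -> B \subset T -> T \subset A :|: B ->
  ind_connected A adj -> ind_connected B adj ->
  (exists p q, [/\ p \in A, q \in B & (p == q) || adj p q]) ->
  ind_connected T adj.
Proof.
move=> sA sB sT cA cB [p [q [pA qB pq]]] y z yT zT.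
have eA : forall y z, y \in A -> z \in A -> connect (rin T adj) y z.
  move=> y' z' yA zA; apply: conn_gen (cA y' z' yA zA) => u v uA vA huv.
  by apply: connect1; rewrite /= (subsetP sA u uA) (subsetP sA v vA).
have eB : forall y z, y \in B -> z \in B -> connect (rin T adj) y z.
  move=> y' z' yA zA; apply: conn_gen (cB y' z' yA zA) => u v uA vA huv.
  by apply: connect1; rewrite /= (subsetP sB u uA) (subsetP sB v vA).
have pT := subsetP sA p pA; have qT := subsetP sB q qB.
have pq1 : connect (rin T adj) p q /\ connect (rin T adj) q p.
  case/orP: pq => [/eqP ->|h]; first by split; apply: connect0.
  by split; apply: connect1; rewrite /= pT qT // adj_sym.
case: pq1 => pq1 qp1.
move: (subsetP sT y yT) (subsetP sT z zT); rewrite !inE => /orP[yA|yB] /orP[zA|zB].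
- exact: eA.
- exact: connect_trans (eA _ _ yA pA) (connect_trans pq1 (eB _ _ qB zB)).
- exact: connect_trans (eB _ _ yB qB) (connect_trans qp1 (eA _ _ pA zA)).
- exact: eB.
Qed.

Lemma clique_sub (K K' : {set V}) : clique4 adj K -> K' \subset K ->
  ind_connected K' adj.
Proof.
move=> [_ cK] sK y z yK zK.
case: (eqVneq y z) => [->|nyz]; first exact: connect0.
apply: connect1; rewrite /= yK zK.
exact: cK (subsetP sK y yK) (subsetP sK z zK) nyz.
Qed.

Definition twoc (S : {set V}) :=
  ind_connected S adj /\ forall v, ind_connected (S :\ v) adj.

Lemma ext_2conn (S K : {set V}) : twoc S -> clique4 adj K ->
  (exists u y w, [/\ u \in K, u \in S, y \in K & w \in S] /\
                 [/\ y != u, w != u & (y == w) || adj y w]) ->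
  twoc (S :|: K).
Proof.
move=> [cS cSv] cK [u [y [w [[uK uS yK wS] [yu wu yw]]]]].
split.
  apply: (union_conn (subsetUl S K) (subsetUr S K) (subxx _) cS (clique_sub cK (subxx _))).
  by exists u, u; rewrite uS uK eqxx.
move=> v; apply: (union_conn (A := S :\ v) (B := K :\ v)).
- by apply/subsetP => z; rewrite !inE => /andP [-> ->].
- by apply/subsetP => z; rewrite !inE => /andP [-> ->]; rewrite orbT.
- by apply/subsetP => z; rewrite !inE => /andP [-> /orP [] ->]; rewrite ?orbT.
- exact: cSv.
- exact: clique_sub cK (subD1set _ _).
case: (eqVneq v u) => [->|nvu].
  exists w, y; rewrite !inE wu yu wS yK; split => //.
  by rewrite eq_sym adj_sym.
by exists u, u; rewrite !inE eq_sym nvu uS uK eqxx.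
Qed.


Lemma swm_link S K : swm adj M S K ->
  exists u y w, [/\ u \in K, u \in S, y \in K & w \in S] /\
                [/\ y != u, w != u & (y == w) || adj y w].
Proof.
move=> sw; have [cK hsz H3 H2 _] := sw.
case: (leqP #|K :&: S| 1) => le1.
  have n3 : ~ has_link adj S 3 by move=> h; rewrite (H3 h) in le1.
  have n2 : ~ has_link adj S 2 by move=> h; rewrite (H2 n3 h) in le1.
  exact: micro_link sw n3 n2.
have [p [q [pI qI npq]]] := card_gt1P le1.
move: pI qI; rewrite !inE => /andP [pK pS] /andP [qK qS].
by exists p, q, q; rewrite eqxx eq_sym npq.
Qed.

Lemma seq_twoc N VS K : K4_ext_seq adj M N VS K -> forall j, j <= N -> twoc (VS j).
Proof.
move=> [c0 _ H]; elim => [|j IH] jN.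
  by split => [|v]; apply: clique_sub c0 _; rewrite ?subxx ?subD1set.
have [sw E] := H j.+1 jN; rewrite E /=.
exact: ext_2conn (IH (ltnW jN)) (let: And5 c _ _ _ _ := sw in c) (swm_link sw).
Qed.

Lemma seq_mono N VS K : K4_ext_seq adj M N VS K ->
  forall j k, j <= k -> k <= N -> VS j \subset VS k.
Proof.
move=> [_ _ H] j; elim => [|k IH] jk kN.
  by move: jk; rewrite leqn0 => /eqP ->.
case: (leqP j k) => jk'.
  have [_ E] := H k.+1 kN; rewrite E /=.
  exact: subset_trans (IH jk' (ltnW kN)) (subsetUl _ _).
have -> : j = k.+1 by apply/eqP; rewrite eqn_leq jk jk'.
exact: subxx.
Qed.


Definition rab (E : {set V}) := [rel p q | adj p q && ([set p; q] != E)].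

Lemma neq_set (t : V) (P Q : {set V}) : t \in P -> t \notin Q -> Q != P.
Proof. by move=> tP; apply: contraNneq => ->. Qed.

Lemma redge (T E : {set V}) p q : p \in T -> q \in T -> adj p q ->
  [set p; q] != E -> connect (rin T (rab E)) p q.
Proof. by move=> pT qT pq nE; apply: connect1; rewrite /= pT qT pq nE. Qed.

Lemma rin_sym (T E : {set V}) : symmetric (rin T (rab E)).
Proof.
move=> y z /=; rewrite (adj_sym z y) (setUC [set z] [set y]).
by case: (y \in T); case: (z \in T).
Qed.

Lemma set3_card (a b c : V) : #|[set a; b; c]| <= 3.
Proof.
have -> : [set a; b; c] = [set x in [:: a; b; c]].
  by apply/setP=> y; rewrite !inE -!orbA ?orbF.
by rewrite cardsE (leq_trans (card_size _)).
Qed.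

Lemma clique_path (T Kq : {set V}) a b c :
  clique4 adj Kq -> Kq \subset T -> a \in Kq -> b \in Kq ->
  a != b -> b != c -> c != a ->
  connect (rin (T :\ c) (rab [set a; b])) a b.
Proof.
move=> cK sK aK bK nab nbc nca.
have : 0 < #|Kq :\: [set a; b; c]|.
  rewrite cardsD; case: cK => -> _.
  have := leq_trans (subset_leq_card (subsetIr Kq [set a; b; c])) (set3_card a b c).
  by rewrite subn_gt0 => /leq_ltn_trans; apply.
case/card_gt0P => w; rewrite !inE negb_or negb_or => /andP [/andP [/andP [nwa nwb] nwc] wK].
have [_ cl] := cK.
have aT : a \in T :\ c by rewrite !inE eq_sym nca (subsetP sK a aK).
have bT : b \in T :\ c by rewrite !inE nbc (subsetP sK b bK).
have wT : w \in T :\ c by rewrite !inE nwc (subsetP sK w wK).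
apply: (connect_trans (y := w)).
  apply: redge => //; first by apply: cl; rewrite // eq_sym.
  by apply: (neq_set (t := b)); rewrite !inE ?eqxx ?orbT // negb_or eq_sym nab eq_sym nwb.
apply: redge => //; first by apply: cl.
by apply: (neq_set (t := a)); rewrite !inE ?eqxx // negb_or eq_sym nwa.
Qed.


Lemma key_half N VS K i a b c x E : K4_ext_seq adj M N VS K -> i <= N ->
  E = [set a; b] ->
  a \in VS i -> b \in VS i -> c \in VS i -> x \notin VS i ->
  adj a b -> adj b c -> adj c a -> adj x a -> adj x b -> adj x c ->
  forall m, 0 < m <= i -> a \in VS m -> b \in VS m -> b \notin VS m.-1 ->
  connect (rin (VS i :\ c) (rab E)) a b.
Proof.
move=> Hs iN -> ai bi ci xi ab bc ca xa xb xc m /andP [m0 mi] am bm bm'.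
have nab : a != b by apply: contraTneq ab => ->; rewrite (negbTE (adj_irr b)).
have nbc : b != c by apply: contraTneq bc => ->; rewrite (negbTE (adj_irr c)).
have nca : c != a by apply: contraTneq ca => ->; rewrite (negbTE (adj_irr a)).
have [c0 _ H] := Hs.
have mN : m <= N := leq_trans mi iN.
have [sw EV] := H m (andb_true_intro (conj m0 mN)).
have mono := seq_mono Hs.
have sm : VS m \subset VS i := mono _ _ mi iN.
have sm' : VS m.-1 \subset VS i := mono _ _ (leq_trans (leq_pred m) mi) iN.
have sK : K m \subset VS i.
  by apply: subset_trans sm; rewrite EV subsetUr.
have bK : b \in K m.
  by move: bm; rewrite EV inE (negbTE bm').
have [cK hsz H3 H2 _] := sw.
case aK : (a \in K m).
  by apply: clique_path cK sK aK bK nab nbc nca.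
have am' : a \in VS m.-1 by move: am; rewrite EV inE aK orbF.
set S := VS m.-1 in sw hsz H3 H2 am' bm' sm' EV.
have [p [pK pS pc]] : exists p, [/\ p \in K m, p \in S & p != c].
  case cS : (c \in S).
    have xS : x \notin S by apply: contra xi; apply: (subsetP sm').
    have h2 : has_link adj S 2.
      have U : uniq [:: a; b; c; x].
        rewrite /= !inE !negb_or nab eq_sym nca nbc /=.
        by rewrite !andbT; apply/and3P; split; apply: contraNneq xi => <-.
      have ac : adj a c by rewrite adj_sym.
      have ax : adj a x by rewrite adj_sym.
      have bx : adj b x by rewrite adj_sym.
      have cx : adj c x by rewrite adj_sym.
      exists [set a; b; c; x]; split.
        exact: (clique4_of adj_sym U ab ac ax bc bx cx).
      by rewrite card4 //= am' cS (negbTE bm') (negbTE xS).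
    have : 1 < #|K m :&: S|.
      rewrite ltnNge; apply/negP => le1.
      have n3 : ~ has_link adj S 3 by move=> h; rewrite (H3 h) in le1.
      by rewrite (H2 n3 h2) in le1.
    case/card_gt1P => p [q [pI qI npq]].
    move: pI qI; rewrite !inE => /andP [pK pS] /andP [qK qS].
    case: (eqVneq p c) => [pc|pc]; last by exists p.
    by exists q; split => //; rewrite -pc eq_sym.
  move: hsz => /andP [/card_gt0P [p]]; rewrite inE => /andP [pK pS] _.
  by exists p; split => //; apply: contraTneq pS => ->; rewrite cS.
have pa : p != a by apply: contraTneq pK => ->; rewrite aK.
have pb : p != b by apply: contraTneq pS => ->.
have pbadj : adj p b by case: cK => _ cl; apply: cl.
have [_ cSv] := seq_twoc Hs (leq_trans (leq_trans (leq_pred m) mi) iN).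
have aSc : a \in S :\ c by rewrite !inE eq_sym nca am'.
have pSc : p \in S :\ c by rewrite !inE pc pS.
apply: (connect_trans (y := p)).
  apply: conn_gen (cSv c a p aSc pSc) => y z; rewrite !inE => /andP [yc yS] /andP [zc zS] yz.
  apply: redge => //; rewrite ?inE ?yc ?zc ?(subsetP sm' _ yS) ?(subsetP sm' _ zS) //.
  apply: (neq_set (t := b)); rewrite !inE ?eqxx ?orbT // negb_or.
  by apply/andP; split; apply: contraNneq bm' => ->.
apply: redge; rewrite ?inE ?pc ?(subsetP sm' _ pS) ?nbc ?bi //.
apply: (neq_set (t := a)); rewrite !inE ?eqxx // negb_or eq_sym pa //=.
Qed.


Lemma key_path N VS K i a b c x : K4_ext_seq adj M N VS K -> i <= N ->
  a \in VS i -> b \in VS i -> c \in VS i -> x \notin VS i ->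
  adj a b -> adj b c -> adj c a -> adj x a -> adj x b -> adj x c ->
  connect (rin (VS i :\ c) (rab [set a; b])) a b.
Proof.
move=> Hs iN ai bi ci xi ab bc ca xa xb xc.
have nab : a != b by apply: contraTneq ab => ->; rewrite (negbTE (adj_irr b)).
have nbc : b != c by apply: contraTneq bc => ->; rewrite (negbTE (adj_irr c)).
have nca : c != a by apply: contraTneq ca => ->; rewrite (negbTE (adj_irr a)).
have ex : exists m, (a \in VS m) && (b \in VS m) by exists i; rewrite ai bi.
case: (ex_minnP ex) => m /andP [am bm] mmin.
have mi : m <= i by apply: mmin; rewrite ai bi.
case: m am bm mmin mi => [|m] am bm mmin mi.
  have [c0 _ _] := Hs.
  exact: clique_path c0 (seq_mono Hs (leq0n i) iN) am bm nab nbc nca.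
have nboth : ~~ ((a \in VS m) && (b \in VS m)).
  by apply/negP => /mmin; rewrite ltnn.
case bm' : (b \in VS m).
  have am' : a \notin VS m by move: nboth; rewrite bm' andbT.
  rewrite (sym_connect_sym (@rin_sym _ _)).
  have ba : adj b a by rewrite adj_sym.
  have ac : adj a c by rewrite adj_sym.
  have cb : adj c b by rewrite adj_sym.
  apply: (key_half Hs iN _ bi ai ci xi ba ac cb xb xa xc (m := m.+1)) => //.
  by rewrite setUC.
apply: (key_half Hs iN _ ai bi ci xi ab bc ca xa xb xc (m := m.+1)) => //.
by rewrite /= bm'.
Qed.

Lemma transfer (T E : {set V}) a b : E = [set a; b] -> a != b ->
  ind_connected T adj ->
  (a \in T -> b \in T -> connect (rin T (rab E)) a b) ->
  ind_connected T (rab E).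
Proof.
move=> HE nab cT Hab y z yT zT.
apply: conn_gen (cT y z yT zT) => u v uT vT uv.
case: (eqVneq [set u; v] E) => h; last exact: redge.
have nuv : u != v by apply: contraTneq uv => ->; rewrite (negbTE (adj_irr v)).
have uE : u \in E by rewrite -h !inE eqxx.
have vE : v \in E by rewrite -h !inE eqxx orbT.
move: uE vE; rewrite HE !inE => /orP [] /eqP Eu /orP [] /eqP Ev;
  move: uT vT nuv; rewrite Eu Ev ?eqxx // => uT vT _.
- by rewrite -HE; exact: Hab.
- by rewrite -HE (sym_connect_sym (@rin_sym _ _)); apply: Hab.
Qed.

Lemma no_bad N VS K i a b c x : K4_ext_seq adj M N VS K -> i <= N ->
  a \in VS i -> b \in VS i -> c \in VS i -> x \notin VS i ->
  adj a b -> adj b c -> adj c a -> adj x a -> adj x b -> adj x c ->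
  nonremovable adj (VS i) a b -> False.
Proof.
move=> Hs iN ai bi ci xi ab bc ca xa xb xc; apply.
have nab : a != b by apply: contraTneq ab => ->; rewrite (negbTE (adj_irr b)).
have nbc : b != c by apply: contraTneq bc => ->; rewrite (negbTE (adj_irr c)).
have nca : c != a by apply: contraTneq ca => ->; rewrite (negbTE (adj_irr a)).
have ac : adj a c by rewrite adj_sym.
have cb : adj c b by rewrite adj_sym.
have acb : forall T : {set V}, a \in T -> b \in T -> c \in T ->
    connect (rin T (rab [set a; b])) a b.
  move=> T aT bT cT; apply: (connect_trans (y := c)).
    apply: redge => //; apply: (neq_set (t := b)); rewrite !inE ?eqxx ?orbT //.
    by rewrite negb_or eq_sym nab nbc.
  apply: redge => //; apply: (neq_set (t := a)); rewrite !inE ?eqxx //.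
  by rewrite negb_or eq_sym nca nab.
have [cS cSv] := seq_twoc Hs iN.
split.
- have U : uniq [:: a; b; c] by rewrite /= !inE negb_or nab eq_sym nca nbc.
  have h3 : #|[set x in [:: a; b; c]] :&: VS i| = 3 by rewrite card_l //= ai bi ci.
  by rewrite -h3; apply: subset_leq_card; apply: subsetIr.
- apply: (transfer (a := a) (b := b)) => // aT bT; exact: acb.
move=> v vi; apply: (transfer (a := a) (b := b)) => // aT bT.
case: (eqVneq v c) => [->|nvc].
  exact: (key_path Hs iN ai bi ci xi ab bc ca xa xb xc).
by apply: acb => //; rewrite !inE eq_sym nvc ci.
Qed.


Lemma clique4_adj p0 p1 p2 p3 : clique4 adj [set p0; p1; p2; p3] ->
  uniq [:: p0; p1; p2; p3] ->
  [/\ adj p0 p1, adj p0 p2, adj p0 p3, adj p1 p2 & adj p1 p3 /\ adj p2 p3].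
Proof.
move=> [_ cl]; rewrite /= !inE !negb_or => /and4P [/and3P [n01 n02 n03] /andP [n12 n13] n23 _].
by do !split; apply: cl; rewrite // !inE eqxx ?orbT.
Qed.

Lemma crossK x c p q : crosses M x c p q ->
  [/\ adj x p, adj x q, adj x c, adj c p & adj c q].
Proof.
case=> d [ld fd [Nd Hpq]].
have [p0 [p1 [p2 [p3 [E0 E1 E2 E3 [U C]]]]]] := cross_K4 Nd.
move: E0; rewrite aK ld => -[?]; subst p0.
move: fd; rewrite farE Nd E2 => -[?]; subst p2.
have [h01 h02 h03 h12 [h13 h23]] := clique4_adj C U.
case: Hpq => -[]; rewrite ?E1 ?E3 => -[<-] [<-]; split => //; by rewrite adj_sym.
Qed.

End Draw.

Theorem proposition4p10 (V : finType) (adj : rel V) (M : map1p V)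
  (N : nat) (VS F : nat -> {set V}) (i : nat) (x : V) :
  drawing adj M -> maximal adj M -> 4 <= #|V| -> every_edge_in_K4 adj ->
  K4_ext_seq adj M N VS F -> i < N ->
  #|F i.+1 :&: VS i| = 3 -> x \in F i.+1 -> x \notin VS i ->
  ~ (exists a1 b1 a2 b2 c1 c2 : V,
       [/\ [/\ a1 \in VS i, b1 \in VS i, a2 \in VS i & b2 \in VS i] /\
           (c1 \in VS i /\ c2 \in VS i),
           adj a1 b1, adj a2 b2, [set a1; b1] != [set a2; b2] &
           [/\ nonremovable adj (VS i) a1 b1, nonremovable adj (VS i) a2 b2,
               crosses M x c1 a1 b1 & crosses M x c2 a2 b2]])
  /\
  ~ (exists a b c : V,
       [/\ [/\ a \in VS i, b \in VS i & c \in VS i],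
           [/\ adj a b, adj b c & adj c a],
           nonremovable adj (VS i) a b,
           cutset adj (VS i) [set a; c] /\ cutset adj (VS i) [set b; c] &
           crosses M x c a b]).
Proof.
move=> Hd Hmax _ _ Hs iN _ _ xi.
have iN' : i <= N := ltnW iN.
split.
  case=> a1 [b1 [a2 [b2 [c1 [c2 [[[a1i b1i _ _] [c1i _]] ab _ _ [nr _ cr _]]]]]]].
  have [xa xb xc ca cb] := crossK Hd Hmax cr.
  have bc : adj b1 c1 by rewrite (adj_sym Hd).
  exact: (no_bad Hd Hmax Hs iN' a1i b1i c1i xi ab bc ca xa xb xc nr).
case=> a [b [c [[ai bi ci] [ab bc ca] nr _ cr]]].
have [xa xb xc _ _] := crossK Hd Hmax cr.
exact: (no_bad Hd Hmax Hs iN' ai bi ci xi ab bc ca xa xb xc nr).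
Qed.
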